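(* Let $p\in[1,\infty)$ and $\zeta\in M_p^{n-1}$. If $u_k,u\in\mathrm{Conv}_{\mathrm{coe}}^{(n)}(\mathbb{R}^n)$ are such that $\delta_{\zeta,p}(u_k,u)\to 0$, then $u_k(x_0)\to+\infty$ as $k\to\infty$ for every $x_0\in\mathrm{int}(\mathbb{R}^n\setminus\mathrm{dom}\,u)$.
   Context: $\mathrm{Conv}_{\mathrm{coe}}^{(n)}(\mathbb{R}^n)$ is the set of proper, lower semicontinuous, convex, coercive $u:\mathbb{R}^n\to\mathbb{R}\cup\{+\infty\}$ with $\mathrm{dom}\,u=\{u<+\infty\}$ of dimension $n$. $M_p^{n-1}$ is the set of continuous, strictly decreasing $\zeta:\mathbb{R}\to(0,\infty)$ with $\int_0^\infty\zeta(t)^pt^{n-1}dt<\infty$. $\delta_{\zeta,p}(u,v)=\left(\int_{\mathbb{R}^n}|\zeta(u(x))-\zeta(v(x))|^pdx\right)^{1/p}$ with $\zeta(+\infty):=0$. *)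

(* Defs.v *)
From HB Require Import structures.
From mathcomp Require Import all_boot all_order all_algebra.
From mathcomp Require Import all_classical all_reals all_analysis.
Set Implicit Arguments. Unset Strict Implicit. Unset Printing Implicit Defensive.
Import Order.TTheory GRing.Theory Num.Theory.
Import numFieldNormedType.Exports.
Local Open Scope classical_set_scope.
Local Open Scope ring_scope.

Section Defs.
Variable R : realType.
Local Open Scope ereal_scope.

Definition edom (n : nat) (u : 'rV[R]_n -> \bar R) : set 'rV[R]_n :=
  [set x | u x < +oo].

Definition conv_fun (n : nat) (u : 'rV[R]_n -> \bar R) : Prop :=
  forall (x y : 'rV[R]_n) (t : R), (0 <= t <= 1)%R ->
    u ((1 - t) *: x + t *: y)%R <= (1 - t)%R%:E * u x + t%:E * u y.

Definition proper_fun (n : nat) (u : 'rV[R]_n -> \bar R) : Prop :=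
  (forall x, u x != -oo) /\ (exists x, u x < +oo).

Definition coercive (n : nat) (u : 'rV[R]_n -> \bar R) : Prop :=
  forall M : R, exists r : R, forall x : 'rV[R]_n, (r < `|x|)%R -> M%:E < u x.

(* the affine hull of dom u has dimension n, i.e. dom u contains n+1
   affinely independent points x0, x0 + row i M (i < n) with M of rank n *)
Definition full_dim_dom (n : nat) (u : 'rV[R]_n -> \bar R) : Prop :=
  exists (x0 : 'rV[R]_n) (M : 'M[R]_n),
    edom u x0 /\ (forall i, edom u (x0 + row i M)%R) /\ \rank M = n.

Definition Conv_coe (n : nat) (u : 'rV[R]_n -> \bar R) : Prop :=
  [/\ proper_fun u, lower_semicontinuous u, conv_fun u, coercive u
    & full_dim_dom u].

Definition M_p (n : nat) (p : R) (zeta : R -> R) : Prop :=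
  [/\ continuous zeta,
      (forall s t : R, (s < t)%R -> (zeta t < zeta s)%R),
      (forall t : R, (0 < zeta t)%R)
    & \int[@lebesgue_measure R]_(t in `[0%R, +oo[)
          ((zeta t) `^ p * t ^+ n.-1)%:E < +oo].

Definition zeta_ext (zeta : R -> R) (y : \bar R) : R :=
  match y with EFin r => zeta r | _ => 0%R end.

(* Lebesgue integral over R^n of a nonnegative function, as an iterated
   integral (Tonelli) w.r.t. the one-dimensional Lebesgue measure *)
Fixpoint iint (n : nat) : ('rV[R]_n -> \bar R) -> \bar R :=
  match n with
  | 0 => fun f => f 0%R
  | m.+1 => fun f => \int[@lebesgue_measure R]_(t in [set: R])
                 iint (fun y : 'rV[R]_m => f (row_mx (\row_(_ < 1) t) y))
  end.

Definition delta (n : nat) (zeta : R -> R) (p : R)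
    (u v : 'rV[R]_n -> \bar R) : \bar R :=
  (iint (fun x => (`| zeta_ext zeta (u x) - zeta_ext zeta (v x) | `^ p)%:E))
    `^ (p^-1).

End Defs.

(* Main.v *)
Require Import Defs.
From HB Require Import structures.
From mathcomp Require Import all_boot all_order all_algebra.
From mathcomp Require Import all_classical all_reals all_analysis.
From mathcomp Require Import ring lra.
Import Order.TTheory GRing.Theory Num.Theory.
Import numFieldNormedType.Exports.
Local Open Scope classical_set_scope.
Local Open Scope ring_scope.
Set Implicit Arguments. Unset Strict Implicit. Unset Printing Implicit Defensive.

Section Geo.
Variable R : realType.

Definition cube n (z : 'rV[R]_n) (r : R) (x : 'rV[R]_n) :=
  forall j, `|x ord0 j - z ord0 j| <= r.
Definition convS n (S : set 'rV[R]_n) := forall x y (t : R), 0 <= t <= 1 ->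
  S x -> S y -> S ((1 - t) *: x + t *: y).

Lemma cube_row_mx m (a a' : 'rV[R]_1) (b b' : 'rV[R]_m) r :
  cube (row_mx a b) r (row_mx a' b') <-> `|a' 0 0 - a 0 0| <= r /\ cube b r b'.
Proof.
split.
- move=> H; split.
    by have := H (lshift m ord0); rewrite !row_mxEl.
  by move=> j; have := H (rshift 1 j); rewrite !row_mxEr.
- move=> [H1 H2] j; rewrite -(splitK j); case: (fintype.split j) => k /=.
    by rewrite !row_mxEl (ord1 k).
  by rewrite !row_mxEr.
Qed.

Lemma cube_convex n (c : 'rV[R]_n) r : 0 <= r -> convS (cube c r).
Proof.
move=> r0 x y t /andP[t0 t1] Hx Hy j.
rewrite !mxE.
have -> : (1 - t) * x ord0 j + t * y ord0 j - c ord0 j =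
  (1 - t) * (x ord0 j - c ord0 j) + t * (y ord0 j - c ord0 j) by ring.
apply: (le_trans (ler_normD _ _)).
rewrite !normrM (ger0_norm t0) ger0_norm ?subr_ge0 //.
have -> : r = (1 - t) * r + t * r by ring.
apply: lerD; apply: ler_wpM2l => //; by rewrite ?subr_ge0.
Qed.

Lemma corner n : forall (S : set 'rV[R]_n) z r, 0 < r -> convS S ->
  (forall c, cube z (2 * r) c -> exists y, S y /\ cube c r y) ->
  forall x, cube z r x -> S x.
Proof.
elim: n => [|m IH] S z r r0 cS HS x xz.
  have [|y [Sy _]] := HS z.
    by move=> j; rewrite subrr normr0 mulr_ge0 // ltW.
  by rewrite (thinmx0 x) -(thinmx0 y).
move: x z xz HS.
change (forall x z : 'rV[R]_(1 + m), cube z r x ->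
  (forall c, cube z (2 * r) c -> exists y, S y /\ cube c r y) -> S x).
move=> x z; rewrite -[x]hsubmxK -[z]hsubmxK.
set L := lsubmx x; set xr := rsubmx x; set a := lsubmx z; set zr := rsubmx z.
move=> /cube_row_mx [xa xzr] HS.
pose S' := fun y : 'rV[R]_m => S (row_mx L y).
have cS' : convS S'.
  move=> y1 y2 s s01 H1 H2; rewrite /S'.
  have -> : row_mx L ((1 - s) *: y1 + s *: y2) =
     (1 - s) *: row_mx L y1 + s *: row_mx L y2 :> 'rV_(1 + m).
    by rewrite !scale_row_mx add_row_mx -scalerDl subrK scale1r.
  exact: cS.
apply: (IH S' zr r r0 cS') => // c' Hc'.
pose t := L 0 0.
have getp : forall d : R, `|d| <= 2 * r -> exists l : 'rV[R]_1, exists yr,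
    S (row_mx l yr) /\ `|l 0 0 - (a 0 0 + d)| <= r /\ cube c' r yr.
  move=> d hd.
  have [|y [Sy Hy]] := HS (row_mx (\row_(_ < 1) (a 0 0 + d)) c').
    apply/cube_row_mx; split => //.
    by rewrite mxE addrC addKr.
  have ey : y = row_mx (@lsubmx R 1 1 m y) (@rsubmx R 1 1 m y) :=
    esym (hsubmxK (y : 'rV_(1 + m))).
  exists (@lsubmx R 1 1 m y), (@rsubmx R 1 1 m y).
  rewrite -ey; split => //.
  rewrite ey in Hy; move: Hy => /cube_row_mx [h1 h2]; split => //.
  by move: h1; rewrite [X in `|_ - X|]mxE.
have [|lp [rp [Sp [hp cp]]]] := getp (2 * r).
  by rewrite ger0_norm // mulr_ge0 // ltW.
have [|lm [rm [Sm [hm cm]]]] := getp (- (2 * r)).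
  by rewrite normrN ger0_norm // mulr_ge0 // ltW.
set al := lp 0 0 in hp; set be := lm 0 0 in hm.
move: hp hm xa; rewrite -/t => hp hm xa.
have hal : a 0 0 + r <= al.
  move: hp; rewrite ler_norml => /andP[h _]; by lra.
have hbe : be <= a 0 0 - r.
  move: hm; rewrite ler_norml => /andP[_ h]; by lra.
have hta : a 0 0 - r <= t <= a 0 0 + r.
  by move: xa; rewrite ler_norml => /andP[h1 h2]; apply/andP; split; lra.
have dpos : 0 < al - be by lra.
pose s := (t - be) / (al - be).
have s01 : 0 <= s <= 1.
  apply/andP; split.
    by apply: divr_ge0; lra.
  by rewrite ler_pdivrMr // mul1r; lra.
have cS1 : forall (x y : 'rV[R]_(1 + m)) t, 0 <= t <= 1 -> S x -> S y ->
  S ((1 - t) *: x + t *: y) := cS.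
have := cS1 _ _ _ s01 Sm Sp.
rewrite !scale_row_mx add_row_mx => HSP.
exists ((1 - s) *: rm + s *: rp); split; last first.
  exact: (cube_convex (ltW r0) s01 cm cp).
rewrite /S'.
suff <- : (1 - s) *: lm + s *: lp = L by [].
apply/matrixP => i j; rewrite (ord1 i) (ord1 j) !mxE -/al -/be -/t /s.
have -> : x 0 (lshift m 0) = t by rewrite /t /L mxE.
by field; apply/eqP; lra.
Qed.

Local Open Scope ereal_scope.
Lemma int_lb (g : R -> \bar R) (a b K : R) : (forall t, 0 <= g t) -> (0 <= K)%R ->
  (a <= b)%R -> (forall t, (a <= t <= b)%R -> K%:E <= g t) ->
  (K * (b - a))%:E <= \int[@lebesgue_measure R]_(t in setT) g t.
Proof.
move=> g0 K0 ab Hg.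
rewrite ge0_integralTE //.
have mA : measurable ([set` `[a, b]] : set (measurableTypeR R)) by exact: measurable_itv.
pose h := scale_nnsfun (@indic_nnsfun _ (measurableTypeR R) R _ mA) K0.
apply: ereal_sup_ubound; exists h.
  move=> x /=; rewrite /measurable_realfun.mindic /= indicE.
  have [xA|xA] := boolP (x \in [set` `[a, b]]).
    rewrite mulr1; apply: Hg; move: xA; rewrite inE /=.
    by rewrite in_itv /=.
  by rewrite mulr0 g0.
rewrite -integralT_nnsfun /= /measurable_realfun.mindic /=.
have := @integralZl_indic _ _ _ (@lebesgue_measure R) _ measurableT (fun=> [set` `[a, b]]) K.
move=> /(_ _ mA) /= ->; last by move=> k0; exfalso; lra.
rewrite integral_indic // setIT.
set L := (X in K%:E * X).
have -> : L = lebesgue_measure [set` `[a, b]] := erefl.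
rewrite lebesgue_measure_itv /=.
case: ltP => ab'; first by rewrite -EFinD EFinM.
have -> : b = a by apply/eqP; rewrite eq_le ab -lee_fin ab'.
by rewrite subrr mulr0 mule0.
Qed.

Lemma iint_ge0 n : forall (f : 'rV[R]_n -> \bar R), (forall x, 0 <= f x) -> 0 <= iint f.
Proof.
elim: n => [|m IH] f f0 /=; first exact: f0.
apply: integral_ge0 => t _; apply: IH => y; exact: f0.
Qed.

Lemma iint_lb n : forall (f : 'rV[R]_n -> \bar R) z (r c : R), (0 <= r)%R -> (0 <= c)%R ->
  (forall x, 0 <= f x) -> (forall x, cube z r x -> c%:E <= f x) ->
  (c * (2 * r) ^+ n)%:E <= iint f.
Proof.
elim: n => [|m IH] f z r c r0 c0 f0 Hf /=.
  by rewrite expr0 mulr1; apply: Hf => -[j hj].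
set a := (@lsubmx R 1 1 m z) ord0 ord0.
rewrite (_ : (c * (2 * r) ^+ m.+1 = (c * (2 * r) ^+ m) * ((a + r) - (a - r)))%R); last first.
  by rewrite exprS; ring.
apply: int_lb.
- by move=> t; apply: iint_ge0 => y; exact: f0.
- by rewrite mulr_ge0 // exprn_ge0 // mulr_ge0.
- by lra.
move=> t ht; apply: (IH _ (@rsubmx R 1 1 m z) r c) => // y hy.
apply: Hf.
rewrite -[z](@hsubmxK R 1 1 m); apply/cube_row_mx; split => //.
rewrite mxE -/a ler_norml; apply/andP; split; lra.
Qed.

Local Close Scope ereal_scope.

Lemma jensen n (S : set 'rV[R]_n) a (I : eqType) (s : seq I) : convS S -> S a ->
  forall (w : I -> R) (v : I -> 'rV[R]_n), (forall i, i \in s -> 0 <= w i /\ S (a + v i)) ->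
  \sum_(i <- s) w i < 1 -> S (a + \sum_(i <- s) w i *: v i).
Proof.
move=> cS Sa; elim: s => [|i s IH] w v H Hs.
  by rewrite big_nil addr0.
rewrite big_cons; rewrite big_cons in Hs.
have [wi0 Sv] := H i (mem_head _ _).
have W0 : 0 <= \sum_(j <- s) w j.
  rewrite big_seq; apply: sumr_ge0 => j js.
  have jin : j \in i :: s by rewrite inE js orbT.
  by have [] := H j jin.
have wi1 : 0 < 1 - w i by lra.
have HS' := IH (fun j => w j / (1 - w i)) v.
have {HS'} HS' : S (a + \sum_(j <- s) (w j / (1 - w i)) *: v j).
  apply: HS'.
    move=> j js; have jin : j \in i :: s by rewrite inE js orbT.
    have [h1 h2] := H j jin.
    by split => //; apply: divr_ge0 => //; exact: ltW.
  rewrite -mulr_suml ltr_pdivrMr // mul1r; lra.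
have wi01 : 0 <= w i <= 1 by apply/andP; split; lra.
have := cS _ _ _ wi01 HS' Sv.
rewrite (_ : \sum_(j <- s) (w j / (1 - w i)) *: v j =
   (1 - w i)^-1 *: \sum_(j <- s) w j *: v j); last first.
  by rewrite scaler_sumr; apply: eq_bigr => j _; rewrite scalerA mulrC.
rewrite scalerDr scalerA mulfV ?scale1r; last by rewrite gt_eqF.
rewrite scalerDr scalerBl scale1r.
set A := w i *: a; set V := \sum_(j <- s) _; set B := w i *: v i.
suff -> : a - A + V + (A + B) = a + (B + V) by [].
by rewrite -!addrA (addrCA V) addKr (addrC V).
Qed.

Lemma le_sum_term (I : finType) (F : I -> R) j : (forall i, 0 <= F i) ->
  F j <= \sum_i F i.
Proof. by move=> F0; rewrite (bigD1 j) //= lerDl sumr_ge0. Qed.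

Lemma simplex_cube n (S : set 'rV[R]_n) x0 (M : 'M[R]_n) : convS S -> S x0 ->
  (forall i, S (x0 + row i M)) -> \rank M = n ->
  exists z (rho : R), 0 < rho /\ forall x, cube z rho x -> S x.
Proof.
move=> cS Sx0 SM rM.
have uM : M \in unitmx by rewrite -row_free_unit /row_free rM.
set N := invmx M.
set c : R := (4 * (n%:R + 1))^-1.
have c0 : 0 < c by rewrite invr_gt0 mulr_gt0 // ltr_pwDr.
set K : R := 1 + \sum_i \sum_j `|N i j|.
have K0 : 0 < K by rewrite ltr_pwDl // sumr_ge0 // => i _; rewrite sumr_ge0.
set rho := c / K.
have rho0 : 0 < rho by rewrite divr_gt0.
set w0 : 'rV[R]_n := const_mx c.
exists (x0 + w0 *m M), rho; split => // x hx.
set w := (x - x0) *m N.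
have ex : x = x0 + w *m M by rewrite /w mulmxKV // addrC subrK.
have ew : w = (x - (x0 + w0 *m M)) *m N + w0.
  by rewrite /w /N -{2}(mulmxK uM w0) -mulmxDl opprD addrA subrK.
have wb : forall i, 0 <= w ord0 i <= 2 * c.
  move=> i.
  have hb : `|((x - (x0 + w0 *m M)) *m N) ord0 i| <= c.
    rewrite mxE; apply: (le_trans (ler_norm_sum _ _ _)).
    apply: (@le_trans _ _ (\sum_k rho * `|N k i|)).
      apply: ler_sum => k _; rewrite normrM; apply: ler_wpM2r => //.
      by have := hx k; rewrite !mxE.
    rewrite -mulr_sumr.
    have -> : c = rho * K by rewrite /rho mulrAC -mulrA mulfV ?mulr1 // gt_eqF.
    apply: ler_wpM2l; first exact: ltW.
    rewrite /K; apply: (le_trans _ (ler_wpDl ler01 (lexx _))) => //.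
    apply: ler_sum => k _; exact: (@le_sum_term _ (fun j => `|N k j|) i (fun j => normr_ge0 _)).
  rewrite ew mxE [w0 _ _]mxE.
  move: hb; rewrite ler_norml => /andP[h1 h2]; apply/andP; split; lra.
rewrite ex mulmx_sum_row.
apply: jensen => //.
  by move=> i _; have /andP[h _] := wb i; split.
apply: (@le_lt_trans _ _ (\sum_(i < n) 2 * c)).
  by apply: ler_sum => i _; have /andP[_ h] := wb i.
rewrite sumr_const card_ord -mulr_natr /c.
have nn : 0 <= n%:R :> R by [].
rewrite -[X in X < 1]mulr_natr mulrAC ltr_pdivrMr; last by rewrite mulr_gt0 // ltr_pwDr.
lra.
Qed.

Lemma sublevel_conv n (v : 'rV[R]_n -> \bar R) (A : R) : conv_fun v ->
  convS [set y | (v y <= A%:E)%E].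
Proof.
move=> cv x y t t01 hx hy /=; have /andP[t0 t1] := t01.
apply: (le_trans (cv x y t t01)).
have -> : A%:E = ((1 - t)%:E * A%:E + t%:E * A%:E)%E.
  by rewrite -!EFinM -EFinD; congr EFin; ring.
by apply: leeD; apply: lee_wpmul2l => //; rewrite lee_fin; lra.
Qed.

Lemma zeta_le (zeta : R -> R) : (forall s t : R, s < t -> zeta t < zeta s) ->
  forall s t, s <= t -> zeta t <= zeta s.
Proof.
move=> hz s t; rewrite le_eqVlt => /orP[/eqP -> //|/hz]; exact: ltW.
Qed.

Lemma zext_ge (zeta : R -> R) : (forall s t : R, s < t -> zeta t < zeta s) ->
  forall (v : \bar R) a, v != -oo%E -> (v <= a%:E)%E -> zeta a <= zeta_ext zeta v.
Proof.
by move=> hz [r| |] a //= _; rewrite lee_fin; exact: zeta_le.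
Qed.

Lemma zext_le (zeta : R -> R) : (forall s t : R, s < t -> zeta t < zeta s) ->
  (forall t, 0 < zeta t) ->
  forall (v : \bar R) b, (b%:E < v)%E -> zeta_ext zeta v <= zeta b.
Proof.
move=> hz hp [r| |] b //=; rewrite ?lte_fin.
  by move=> /hz /ltW.
by move=> _; exact: ltW.
Qed.

Lemma pow_lb (I : \bar R) (c p : R) : 1 <= p -> 0 < c -> (c%:E <= I)%E ->
  ((c `^ p^-1)%:E <= I `^ p^-1)%E.
Proof.
move=> p1 c0; case: I => [x| |] //= h.
- move: h; rewrite !lee_fin => h; apply: ge0_ler_powR => //.
  + by rewrite invr_ge0; lra.
  + by rewrite nnegrE ltW.
  + by rewrite nnegrE; lra.
- rewrite ifF ?leey //; apply/negbTE; rewrite invr_neq0 //; apply/eqP; lra.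
Qed.

Lemma interior_cube n (A : set 'rV[R]_n) x : interior A x ->
  exists e : R, 0 < e /\ forall y : 'rV[R]_n,
    (forall j, `|x ord0 j - y ord0 j| < e) -> A y.
Proof.
rewrite /interior /= => /nbhs_ballP [e e0 H]; exists e; split => // y Hy.
apply: (H y); split => // i j; rewrite (ord1 i); exact: Hy j.
Qed.

Lemma fin_le_abs (v : \bar R) : (v < +oo)%E -> v != -oo%E -> (v <= `|fine v|%:E)%E.
Proof. by case: v => // r _ _; rewrite lee_fin ler_norm. Qed.

End Geo.

Unset Implicit Arguments. Set Strict Implicit.

Theorem lemma3p9 (R : realType) (n : nat) (p : R) (zeta : R -> R)
    (u_ : nat -> 'rV[R]_n -> \bar R) (u : 'rV[R]_n -> \bar R) :
  1 <= p -> M_p n p zeta ->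
  (forall k, Conv_coe (u_ k)) -> Conv_coe u ->
  (fun k => delta zeta p (u_ k) u) @ \oo --> 0%E ->
  forall x0 : 'rV[R]_n, interior (~` edom u) x0 ->
    (fun k => u_ k x0) @ \oo --> +oo%E.
Proof.
move=> p1 [zc zdec zpos _] Huk Hu Hd x0 Hx0.
have p0 : 0 < p by lra.
have [e [e0 He]] := interior_cube Hx0.
have uinf : forall y : 'rV[R]_n, (forall j, `|x0 ord0 j - y ord0 j| < e) -> u y = +oo%E.
  by move=> y /He; rewrite /edom /= ltey => /negP; rewrite negbK => /eqP.
case: Hu => [[uninf _] _ ucv _ [y0 [Mx [Hy0 [HyM rM]]]]].
set A : R := `|fine (u y0)| + \sum_i `|fine (u (y0 + row i Mx))|.
have S0 : (u y0 <= A%:E)%E.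
  apply: (le_trans (fin_le_abs Hy0 (uninf y0))).
  by rewrite lee_fin lerDl sumr_ge0.
have Si : forall i, (u (y0 + row i Mx)%R <= A%:E)%E.
  move=> i; apply: (le_trans (fin_le_abs (HyM i) (uninf _))).
  rewrite lee_fin /A; apply: ler_wpDl => //.
  exact: (@le_sum_term _ _ (fun j => `|fine (u (y0 + row j Mx))|) i (fun j => normr_ge0 _)).
have [z [rho [rho0 Hz]]] := simplex_cube (@sublevel_conv _ _ u A ucv) S0 Si rM.
set r := rho / 3.
have r0 : 0 < r by rewrite divr_gt0.
have HzS : forall y, cube z (3 * r) y -> (u y <= A%:E)%E.
  by move=> y hy; apply: Hz; move: hy; rewrite /r mulrC divfK // pnatr_eq0.
set B := A + 1.
have zAB : 0 < zeta A - zeta B by rewrite subr_gt0 zdec // /B ltrDl.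
set D := \sum_j `|z ord0 j - x0 ord0 j|.
have D0 : 0 <= D by rewrite sumr_ge0.
set t := e / (e + D + r).
have t0 : 0 < t by rewrite divr_gt0 //; lra.
have t1 : t <= 1 by rewrite ler_pdivrMr ?mul1r; lra.
have tD : t * (D + r) < e.
  rewrite /t mulrAC ltr_pdivrMr; last lra.
  by rewrite mulrDr; nra.
apply/cvgeyPge => Mb.
set C := Num.max Mb B.
set eps1 := ((zeta A - zeta B) `^ p * (2 * r) ^+ n) `^ p^-1.
set eps2 := ((zeta C) `^ p * (2 * (t * r)) ^+ n) `^ p^-1.
set eps := Num.min eps1 eps2.
have c10 : 0 < (zeta A - zeta B) `^ p * (2 * r) ^+ n.
  by rewrite mulr_gt0 ?powR_gt0 // exprn_gt0 // mulr_gt0.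
have c20 : 0 < (zeta C) `^ p * (2 * (t * r)) ^+ n.
  by rewrite mulr_gt0 ?powR_gt0 ?exprn_gt0 ?mulr_gt0 // invr_gt0; lra.
have eps0 : 0 < eps by rewrite lt_min !powR_gt0.
have Hev : \forall k \near \oo, (delta zeta p (u_ k) u < eps%:E)%E.
  have H0 : nbhs (0%:E : \bar R) [set y | (y < eps%:E)%E].
    apply/nbhs_EFin; apply/nbhs_ballP; exists eps => //= y.
    rewrite /ball /= sub0r normrN lte_fin => hy.
    exact: le_lt_trans (ler_norm y) hy.
  exact: Hd _ H0.
apply: filterS Hev => k Hk.
rewrite leNgt; apply/negP => Hlt.
have [[ukninf _] _ ukcv _ _] := Huk k.
set F := fun x => (`|zeta_ext zeta (u_ k x) - zeta_ext zeta (u x)| `^ p)%:E.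
have F0 : forall x, (0 <= F x)%E by move=> x; rewrite lee_fin powR_ge0.
suff [c [c0 [ce cI]]] : exists c, 0 < c /\ eps <= c `^ p^-1 /\ (c%:E <= iint F)%E.
  have := pow_lb p1 c0 cI.
  rewrite -/(delta zeta p (u_ k) u) => hl.
  have := le_lt_trans hl Hk; rewrite lte_fin => hh.
  by move: (lt_le_trans hh ce); rewrite ltxx.
have [[c [hc Hc]] | Hn] := pselect (exists c, cube z (2 * r) c /\
    forall y, cube c r y -> (B%:E < u_ k y)%E).
  exists ((zeta A - zeta B) `^ p * (2 * r) ^+ n); split => //; split.
    by rewrite ge_min lexx.
  apply: (@iint_lb R n F c r) => //; first by rewrite ltW.
    by rewrite powR_ge0.
  move=> y hy.
  have uy : (u y <= A%:E)%E.
    apply: HzS => j; have := hy j; have := hc j.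
    move=> h1 h2; have := ler_normD (y ord0 j - c ord0 j) (c ord0 j - z ord0 j).
    rewrite addrA subrK => h3; apply: (le_trans h3); lra.
  have h1 := zext_ge zdec (uninf y) uy.
  have h2 := zext_le zdec zpos (Hc y hy).
  rewrite lee_fin; apply: ge0_ler_powR; first exact: ltW.
  - by rewrite nnegrE ltW.
  - by rewrite nnegrE.
  rewrite distrC; apply: le_trans (ler_norm _); lra.
have Hcor : forall c, cube z (2 * r) c ->
    exists y, [set y | (u_ k y <= B%:E)%E] y /\ cube c r y.
  move=> c hc; have := Hn; move/forallNP => /(_ c) /not_andP [//|].
  move=> /existsNP [y] /not_implyP [hy hB]; exists y; split => //=.
  by rewrite leNgt; apply/negP.
have HB := corner r0 (@sublevel_conv _ _ (u_ k) B ukcv) Hcor.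
exists ((zeta C) `^ p * (2 * (t * r)) ^+ n); split => //; split.
  by rewrite ge_min lexx orbT.
apply: (@iint_lb R n F (x0 + t *: (z - x0)) (t * r)) => //.
- by rewrite mulr_ge0 // ltW.
- by rewrite powR_ge0.
move=> x hx.
set y := x0 + t^-1 *: (x - x0).
have hy : cube z r y.
  move=> j; have := hx j; rewrite !mxE => h.
  have -> : x0 ord0 j + t^-1 * (x ord0 j - x0 ord0 j) - z ord0 j =
    t^-1 * (x ord0 j - (x0 ord0 j + t * (z ord0 j - x0 ord0 j))).
    by field; rewrite gt_eqF.
  rewrite normrM gtr0_norm ?invr_gt0 // ler_pdivrMl //.
have ex : x = (1 - t) *: x0 + t *: y.
  apply/matrixP => i j; rewrite !mxE (ord1 i).
  by field; rewrite gt_eqF.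
have hxC : (u_ k x <= C%:E)%E.
  have t01 : 0 <= t <= 1 by apply/andP; split; [exact: ltW|].
  rewrite ex; apply: (le_trans (ukcv x0 y t t01)).
  have -> : C%:E = ((1 - t)%:E * C%:E + t%:E * C%:E)%E.
    by rewrite -!EFinM -EFinD; congr EFin; ring.
  apply: leeD; apply: lee_wpmul2l.
  - by rewrite lee_fin; lra.
  - by apply: le_trans (ltW Hlt) _; rewrite lee_fin le_max lexx.
  - by rewrite lee_fin; lra.
  - by apply: le_trans (HB y hy) _; rewrite lee_fin le_max lexx orbT.
have hux : u x = +oo%E.
  apply: uinf => j; have := hx j; rewrite !mxE => h.
  have hD : `|z ord0 j - x0 ord0 j| <= D.
    exact: (@le_sum_term _ _ (fun j => `|z ord0 j - x0 ord0 j|) j (fun j => normr_ge0 _)).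
  have e1 : x0 ord0 j - x ord0 j = - ((x ord0 j - (x0 ord0 j + t * (z ord0 j - x0 ord0 j)))
     + t * (z ord0 j - x0 ord0 j)) by ring.
  rewrite e1 normrN; apply: le_lt_trans (ler_normD _ _) _.
  rewrite normrM (gtr0_norm t0); apply: (le_lt_trans _ tD).
  rewrite [t * (D + r)]mulrDr [t * D + _]addrC; apply: lerD => //; apply: ler_wpM2l => //; exact: ltW.
have hz1 := zext_ge zdec (ukninf x) hxC.
rewrite /F hux /= subr0 lee_fin; apply: ge0_ler_powR; first exact: ltW.
- by rewrite nnegrE ltW.
- by rewrite nnegrE.
apply: le_trans (ler_norm _); lra.
Qed.
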